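(* Under the standing setting of the context, assume in addition $\beta\in(-2,0)$ and that $f$ is non-constant and does not depend on $\nabla\phi$. Let $\tau\in\mathfrak W_{<0}$. Then $\tau$ has at most one vertex $v$ with noise label $0$, and if such $v$ exists, it has exactly one outgoing edge $e$ whose derivative label $k$ satisfies $|k|_{\mathfrak s}=1$.
   Context: Standing setting. Integers $d\ge2$, $n\ge1$; $E$ a finite-dimensional real normed space; $\beta<0$. Scaling $\mathfrak s=(2,1,\dots,1)$, $|k|_{\mathfrak s}=2k_1+k_2+\dots+k_d$ for $k\in\mathbb N^d$; $\mathbb N^d_{<2}=\{k:|k|_{\mathfrak s}<2\}$. Jets: $\widehat{\mathcal J}=E^{\mathbb N^d}$, elements $\boldsymbol\phi=(\nabla^k\phi)_{k\in\mathbb N^d}$; $\mathcal J=E^{\mathbb N^d_{<2}}$, written $\boldsymbol\phi=(\phi,\nabla\phi)$; functions on $\mathcal J$ are viewed as functions on $\widehat{\mathcal J}$ depending on finitely many components. $P:\mathcal J\to E$ is a polynomial such that for some integer $p\ge2$ and linear $F:E^{\otimes p}\to E$, either $P(\boldsymbol\phi)=F(\phi^{\otimes p})$, or $q=(p-1)/2$ is an integer and $P(\boldsymbol\phi)=F(\phi^{\otimes p})+B(\nabla\phi\otimes\phi^{\otimes q})$ for a linear $B$; $\alpha=2/(p-1)$. $f=(f_1,\dots,f_n):\mathcal J\to L(\mathbb R^n,E)$ is smooth. Subcriticality: if $f$ is constant, $\beta>-\alpha-2$; if $f$ is non-constant but independent of $\nabla\phi$, $\beta>-2$; if $f$ depends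 on $\nabla\phi$, $\beta>-1$. Derivatives: for $\ell\in\mathbb N^d$, $D^\ell g$ is the derivative of $g$ in the $\ell$-th jet component; for a multiset $\mathbf k=\{k_1,\dots,k_r\}$ of elements of $\mathbb N^d$, $D^{\mathbf k}=D^{k_1}\cdots D^{k_r}$, $|\mathbf k|=r$, $|\mathbf k|_{\mathfrak s}=\sum|k_i|_{\mathfrak s}$. Trees: rooted trees with a polynomial label in $\mathbb N^d$ and a noise label in $\{0,\dots,n\}$ on each vertex and a derivative label in $\mathbb N^d$ on each edge, written uniquely (unordered product) as $\tau=X^k\Xi_j\prod_{i=1}^\ell\mathcal I^{k_i}[\tau_i]$: root with polynomial label $k$, noise label $j$, and $\ell$ edges with labels $k_i$ to the roots of subtrees $\tau_i$; $\Xi_0$ is also written $\mathbf 1$. Rules: $\mathfrak R_0=\{\mathbf k: D^{\mathbf k}P\ne0\}$; for $j\ge1$, $\mathfrak R_j=\emptyset$ if $f$ is constant, $\mathfrak R_j=\{\mathbf k:\text{all elements are }0\}$ if $f$ is non-constant and independent of $\nabla\phi$, $\mathfrak R_j=\{\mathbf k:|k|_{\mathfrak s}\le1\ \forall k\in\mathbf k\}$ if $f$ depends on $\nabla\phi$. $\tau$ is conforming if every $\tau_i$ is conforming and $\{k_1,\dots,k_\ell\}\in\mathfrak R_j$ (so every $X^k\Xi_j$ is conforming). Homogeneity: $|\Xi_j|_{\mathfrak s}=\beta$ ($j\ge1$), $|\mathbf 1|_{\mathfrak s}=0$, $|X^k\tau|_{\mathfrak s}=|k|_{\mathfrak s}+|\tau|_{\mathfrak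 s}$, $|\tau\sigma|_{\mathfrak s}=|\tau|_{\mathfrak s}+|\sigma|_{\mathfrak s}$, $|\mathcal I^k[\tau]|_{\mathfrak s}=|\tau|_{\mathfrak s}+2-|k|_{\mathfrak s}$. A leaf is a non-root vertex incident to exactly one edge; it is a polynomial leaf if its noise label is $0$. $\mathfrak W$ is the set of conforming trees with no polynomial leaves, and $\mathfrak W_{<0}=\{\tau\in\mathfrak W:-2<|\tau|_{\mathfrak s}<0\}$. An edge $\{v,w\}$ is outgoing from $v$ if $v$ lies on the path from $w$ to the root. *)

(* Defs.v *)
From HB Require Import structures.
From mathcomp Require Import all_boot all_order all_algebra.
From mathcomp Require Import all_classical all_reals.
From mathcomp Require Import topology normedtype derive.
From Stdlib Require List.

Set Implicit Arguments.
Unset Strict Implicit.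
Unset Printing Implicit Defensive.

Import Order.TTheory GRing.Theory Num.Theory.
Import numFieldNormedType.Exports.
Local Open Scope ring_scope.

(* Coordinate 0 (of 'I_d) is the time direction (weight 2).           *)
Definition mi (d : nat) := {ffun 'I_d -> nat}.

Definition scal (d : nat) (k : mi d) : nat :=
  (\sum_(i < d) (if (i : nat) == 0%N then 2 * k i else k i))%N.

Definition mi0 (d : nat) : mi d := [ffun => 0%N].

Definition ei (d : nat) (i : 'I_d) : mi d := [ffun j => nat_of_bool (j == i)].

(* Jets.  A full jet (element of \hat J = E^{N^d}) is a function        *)
(* from multi-indices to E.  Functions on J are functions on \hat J    *)
(* depending only on the components k with |k|_s < 2.                  *)
Definition jet (d : nat) (E : Type) := mi d -> E.

Definition upd (T : eqType) (E : Type) (x : T -> E) (k : T) (e : E) : T -> E :=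
  fun l => if l == k then e else x l.

Definition dirD (R : realType) (E : normedModType R) (d : nat)
  (k : mi d) (h : E) (g : jet d E -> E) : jet d E -> E :=
  fun x => derive1 (fun t : R => g (upd x k (x k + t *: h))) 0.

Fixpoint Dmulti (R : realType) (E : normedModType R) (d : nat)
  (ks : seq (mi d)) (hs : seq E) (g : jet d E -> E) : jet d E -> E :=
  match ks, hs with
  | k :: ks', h :: hs' => dirD k h (Dmulti ks' hs' g)
  | _, _ => g
  end.

Definition Dnonzero (R : realType) (E : normedModType R) (d : nat)
  (ks : seq (mi d)) (g : jet d E -> E) : Prop :=
  exists (x : jet d E) (hs : seq E), size hs = size ks /\ Dmulti ks hs g x <> 0.

(* multilinear maps E^m -> E  (= linear maps E^{(x) m} -> E) *)
Definition multilinear (R : realType) (E : normedModType R) (m : nat)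
  (M : ('I_m -> E) -> E) : Prop :=
  forall (i : 'I_m) (v : 'I_m -> E) (a : R) (x y : E),
    M (upd v i (a *: x + y)) = a *: M (upd v i x) + M (upd v i y).

(* The linear map B on grad phi (x) phi^{(x) q}, grad phi in E^{d-1}, is encoded
   by the family (B i)_{i spatial}, each a (q+1)-multilinear map, via
   B(grad phi (x) phi^q) = sum_{i=1}^{d-1} B_i(d_i phi, phi, ..., phi).
   (B at the time index 0 is unused.) *)
Definition Ppoly (R : realType) (E : normedModType R) (d p q : nat)
  (F : ('I_p -> E) -> E) (withB : bool) (B : 'I_d -> ('I_q.+1 -> E) -> E)
  (x : jet d E) : E :=
  F (fun _ => x (mi0 d)) +
  (if withB then
     \sum_(i < d | (i : nat) != 0%N)
        B i (fun j : 'I_q.+1 => if (j : nat) == 0%N then x (ei i) else x (mi0 d))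
   else 0).

(* Trees: root with polynomial label k, noise label j, and children    *)
(* (edge derivative label, subtree).  The order of children is         *)
(* irrelevant for every notion below (unordered product).              *)
Inductive tree (d : nat) : Type :=
  Node : mi d -> nat -> seq (mi d * tree d) -> tree d.

Definition polylab d (t : tree d) : mi d := let: Node k _ _ := t in k.
Definition noise d (t : tree d) : nat := let: Node _ j _ := t in j.
Definition children d (t : tree d) : seq (mi d * tree d) :=
  let: Node _ _ cs := t in cs.

Fixpoint verts d (t : tree d) : seq (tree d) :=
  let: Node _ _ cs := t in
  t :: (fix vs (cs : seq (mi d * tree d)) : seq (tree d) :=
          match cs with
          | [::] => [::]
          | (_, c) :: cs' => verts c ++ vs cs'
          end) cs.

Fixpoint hom (R : realType) (beta : R) d (t : tree d) : R :=
  let: Node k j cs := t in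
  (scal k)%:R + (if j == 0%N then 0 else beta) +
  (fix hs (cs : seq (mi d * tree d)) : R :=
     match cs with
     | [::] => 0
     | (e, c) :: cs' => (hom beta c + 2 - (scal e)%:R) + hs cs'
     end) cs.

Definition f_const (R : realType) (E : normedModType R) d n
  (f : 'I_n -> jet d E -> E) : Prop :=
  forall j x y, f j x = f j y.

Definition f_indep_grad (R : realType) (E : normedModType R) d n
  (f : 'I_n -> jet d E -> E) : Prop :=
  forall j (x y : jet d E), x (mi0 d) = y (mi0 d) -> f j x = f j y.

Definition rule (R : realType) (E : normedModType R) d n
  (P : jet d E -> E) (f : 'I_n -> jet d E -> E) (j : nat) (ks : seq (mi d)) : Prop :=
  if j == 0%N then Dnonzero ks P
  else [/\ ~ f_const f,
           f_indep_grad f -> all (fun k => k == mi0 d) ks &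
           ~ f_indep_grad f -> all (fun k => scal k <= 1)%N ks].

Definition conforming d (Rule : nat -> seq (mi d) -> Prop) (n : nat) (t : tree d) : Prop :=
  forall v, List.In v (verts t) ->
    (noise v <= n)%N /\ Rule (noise v) (map fst (children v)).

Definition no_poly_leaves d (t : tree d) : Prop :=
  forall c, List.In c (map snd (children t)) ->
  forall v, List.In v (verts c) -> children v = [::] -> noise v <> 0%N.

Definition in_W_neg (R : realType) (beta : R) d (Rule : nat -> seq (mi d) -> Prop)
  (n : nat) (t : tree d) : Prop :=
  [/\ conforming Rule n t, no_poly_leaves t & -2 < hom beta t < 0].

(* Main.v *)
Require Import Defs.
From HB Require Import structures.
From mathcomp Require Import all_boot all_order all_algebra.
From mathcomp Require Import all_classical all_reals.
From mathcomp Require Import topology normedtype derive.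
From Stdlib Require List.
From mathcomp Require Import zify lra.
Import Order.TTheory GRing.Theory Num.Theory.
Import numFieldNormedType.Exports.
Local Open Scope ring_scope.
Local Open Scope classical_set_scope.
Set Implicit Arguments.
Unset Strict Implicit.
Unset Printing Implicit Defensive.
Section An.
Variables (R : realType) (E : normedModType R).

Lemma is_derive_tZ (psi : R -> E) : derivable psi 0 1 ->
  is_derive (0:R) (1:R) (fun t => t *: psi t) (psi 0).
Proof.
move=> dpsi.
have cpsi : psi @ (0:R)^' --> psi 0.
  apply: cvg_within_filter.
  by apply: differentiable_continuous; apply/derivable1_diffP.
have key : (fun h : R => h^-1 *: (((fun t => t *: psi t) \o shift 0) (h *: 1)
       - (fun t => t *: psi t) 0)) @ (0:R)^' --> psi 0.
  apply: cvg_trans cpsi; apply: near_eq_cvg; near=> h.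
  have hn0 : h != 0 by near: h; exact: nbhs_dnbhs_neq.
  rewrite /= scale0r subr0 addr0 [h *: 1]mulr1 scalerA mulVf ?scale1r //.
apply: DeriveDef; first by apply/cvg_ex; exists (psi 0).
exact: cvg_lim key.
Unshelve. all: by end_near.
Qed.

Lemma ml_zero r (M : ('I_r -> E) -> E) : multilinear M ->
  forall v i, M (upd v i 0) = 0.
Proof.
move=> HM v i; have := HM i v 1 0 0.
rewrite scale1r addr0 => e.
have := congr1 (fun z => z - M (upd v i 0)) e; by rewrite /= subrr addrK scale1r.
Qed.

Definition phin r (M : ('I_r -> E) -> E) (b : 'I_r -> E) n (a : 'I_r -> E) :=
  fun t : R => M (fun j => a j + t *: (if (j < n)%N then b j else 0)).

Lemma ml_deriv r (M : ('I_r -> E) -> E) (b : 'I_r -> E) : multilinear M ->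
  forall n a, is_derive (0:R) (1:R) (phin M b n a)
     (\sum_(j < r | (j < n)%N) M (upd a j (b j))).
Proof.
move=> HM; elim=> [|n IH] a.
  have -> : phin M b 0 a = cst (M a).
    apply/funext=> t; rewrite /phin /=; congr M; apply/funext=> j.
    by rewrite scaler0 addr0.
  rewrite big_pred0 //; exact: is_derive_cst.
case: (ltnP n r) => [nr|rn]; last first.
  have -> : phin M b n.+1 a = phin M b n a.
    apply/funext=> t; rewrite /phin; congr M; apply/funext=> j.
    by rewrite !(leq_trans (ltn_ord j)) // ltnW.
  rewrite (eq_bigl (fun j : 'I_r => (j < n)%N)); first exact: IH.
  by move=> j; rewrite !(leq_trans (ltn_ord j)) // ltnW.
pose j0 := Ordinal nr.
pose a' := upd a j0 (b j0).
have -> : phin M b n.+1 a = phin M b n a + (fun t => t *: phin M b n a' t).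
  apply/funext=> t /=.
  have e1 : (fun j => a j + t *: (if (j < n.+1)%N then b j else 0)) =
     upd (fun j => a j + t *: (if (j < n)%N then b j else 0)) j0 (t *: b j0 + a j0).
    apply/funext=> j; rewrite /upd; case: eqP => [->|/eqP jn]; first by rewrite /j0 /= ltnSn addrC.
    rewrite ltnS leq_eqVlt; have -> : (nat_of_ord j == n) = false.
      by apply/negbTE; apply: contra jn => /eqP e; apply/eqP/val_inj.
    by [].
  rewrite /phin e1 HM addrC; congr (_ + _).
    congr M; apply/funext=> j; rewrite /upd; case: eqP => [->|//].
    by rewrite /j0 /= ltnn scaler0 addr0.
  congr (_ *: M _); apply/funext=> j; rewrite /a' /upd; case: eqP => [->|//].
  by rewrite /j0 /= ltnn scaler0 addr0.
have -> : \sum_(j < r | (j < n.+1)%N) M (upd a j (b j)) =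
   \sum_(j < r | (j < n)%N) M (upd a j (b j)) + phin M b n a' 0.
  rewrite (bigD1 j0) //= addrC; congr (_ + _).
    apply: eq_bigl => j; rewrite ltnS leq_eqVlt.
    case: (ltnP j n) => jn.
      rewrite orbT /=; apply/negP => /eqP e; by rewrite e /j0 /= ltnn in jn.
    rewrite orbF; case: eqP => //= e; apply/negbTE; rewrite negbK; apply/eqP/val_inj; by rewrite /= e.
  rewrite /phin; congr M; apply/funext=> j; by rewrite scale0r addr0.
apply: is_deriveD.
apply: is_derive_tZ.
by have := IH a'; case.
Qed.

Variable d : nat.

Record mono := Mono { mar : nat; mM : ('I_mar -> E) -> E; msl : 'I_mar -> (mi d + E)%type }.
Arguments mM : clear implicits.
Arguments msl : clear implicits.

Definition slotv (x : jet d E) (s : (mi d + E)%type) : E :=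
  match s with inl k => x k | inr v => v end.
Definition ev (m : mono) (x : jet d E) : E := mM m (fun j => slotv x (msl m j)).
Definition swt (s : (mi d + E)%type) : nat := match s with inl k => scal k | inr _ => 0%N end.
Definition wt (m : mono) : nat := (\sum_(j < mar m) swt (msl m j))%N.
Definition dmono (k : mi d) (h : E) (m : mono) : seq mono :=
  [seq Mono (mM m) (fun i => if i == j then inr h else msl m i) |
     j <- enum 'I_(mar m) & msl m j == inl k].

Lemma ev_line k h m x : multilinear (mM m) ->
  is_derive (0:R) (1:R) (fun t : R => ev m (upd x k (x k + t *: h)))
    (\sum_(m' <- dmono k h m) ev m' x).
Proof.
move=> HM.
pose a := fun j => slotv x (msl m j).
pose b := fun j => if msl m j == inl k then h else 0.
have -> : (fun t : R => ev m (upd x k (x k + t *: h))) = phin (mM m) b (mar m) a.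
  apply/funext=> t; rewrite /ev /phin; congr (mM m); apply/funext=> j.
  rewrite ltn_ord /a /b; case: (msl m j) => [k'|v] /=.
    rewrite /upd; case: eqP => [->|/eqP kk]; first by rewrite eqxx.
    have -> : (inl k' == inl k :> (mi d + E)%type) = false by apply/negbTE.
    by rewrite scaler0 addr0.
  by rewrite scaler0 addr0.
apply: is_derive_eq; first exact: (ml_deriv b HM (mar m) a).
rewrite big_map big_filter big_enum_cond /=.
rewrite big_mkcond [RHS]big_mkcond /=; apply: eq_bigr => j _.
rewrite ltn_ord /b; case: eqP => [_|_]; last by rewrite ml_zero.
congr (mM m); apply/funext=> i; rewrite /upd /a.
by case: eqP.
Qed.

Lemma In_map (A B : Type) (f : A -> B) s y :
  List.In y (map f s) -> exists x, List.In x s /\ y = f x.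
Proof.
elim: s => //= a s IH [<-|/IH [x [H1 H2]]]; first by exists a; split; [left|].
by exists x; split; [right|].
Qed.

Lemma In_filter (A : Type) (P : pred A) s x :
  List.In x (seq.filter P s) -> List.In x s /\ P x.
Proof.
elim: s => //= a s IH; case: ifP => Pa /=.
  by move=> [<-|/IH [H1 H2]]; [split; [left|]|split; [right|]].
by move/IH => [H1 H2]; split; [right|].
Qed.

Lemma In_flatten (A : Type) (ss : seq (seq A)) y :
  List.In y (flatten ss) -> exists s, List.In s ss /\ List.In y s.
Proof.
elim: ss => //= s ss IH /(List.in_app_or s (flatten ss) y) [H|/IH [s' [H1 H2]]].
  by exists s; split; [left|].
by exists s'; split; [right|].
Qed.

Lemma wt_dmono k h m m' : List.In m' (dmono k h m) ->
  multilinear (mM m) -> multilinear (mM m') /\ (wt m' + scal k = wt m)%N.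
Proof.
rewrite /dmono => H HM; have [j [Hj0 ->]] := In_map H; have [_ /eqP Hj] := In_filter Hj0; split => //.
rewrite /wt /= (bigD1 j) //= [in RHS](bigD1 j) //= eqxx Hj /= add0n addnC.
congr (_ + _)%N; apply: eq_bigr => i /negbTE ->; by [].
Qed.

Definition Good (w : nat) (g : jet d E -> E) := exists L : seq mono,
  (forall m, List.In m L -> multilinear (mM m) /\ (wt m <= w)%N) /\
  forall x, g x = \sum_(m <- L) ev m x.

Lemma Good_dirD w g k h : Good w g ->
  Good (w - scal k) (dirD k h g) /\ ((w < scal k)%N -> forall x, dirD k h g x = 0).
Proof.
move=> [L [HL Hg]].
have -> : g = fun x => \sum_(m <- L) ev m x by apply/funext.
have HD : forall x, dirD k h (fun x => \sum_(m <- L) ev m x) x =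
    \sum_(m <- L) \sum_(m' <- dmono k h m) ev m' x.
  move=> x; rewrite /dirD derive1E.
  suff H : is_derive (0:R) (1:R)
    (fun t : R => \sum_(m <- L) ev m (upd x k (x k + t *: h)))
    (\sum_(m <- L) \sum_(m' <- dmono k h m) ev m' x) by rewrite derive_val.
  elim: L HL {Hg} => [|m L IH] HL.
    have -> : (fun t : R => \sum_(m <- [::]) ev m (upd x k (x k + t *: h))) = cst 0.
      by apply/funext=> t; rewrite big_nil.
    rewrite big_nil; exact: is_derive_cst.
  have -> : (fun t : R => \sum_(m0 <- m :: L) ev m0 (upd x k (x k + t *: h))) =
     (fun t : R => ev m (upd x k (x k + t *: h))) +
     (fun t : R => \sum_(m0 <- L) ev m0 (upd x k (x k + t *: h))).
    by apply/funext=> t; rewrite big_cons.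
  rewrite big_cons; apply: is_deriveD.
    by apply: ev_line; have [] := HL m (or_introl erefl).
  by apply: IH => m' Hm'; apply: HL; right.
split.
  exists (flatten (map (dmono k h) L)); split.
    move=> m' H; have [s [Hs Hm']] := In_flatten H; have [m [Hm Es]] := In_map Hs; subst s.
    have [HM Hw] := HL m Hm.
    have [HM' Hw'] := wt_dmono Hm' HM.
    split => //; rewrite leq_subRL; last by apply: leq_trans Hw; rewrite -Hw' leq_addl.
    by rewrite addnC Hw'.
  by move=> x; rewrite HD big_flatten big_map.
move=> wk x; rewrite HD; clear HD Hg.
elim: L HL => [|m L IH] HL; first by rewrite big_nil.
rewrite big_cons IH ?addr0; last by move=> m' Hm'; apply: HL; right.
have [HM Hw] := HL m (or_introl erefl).
case e: (dmono k h m) => [|m' s]; first by rewrite big_nil.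
have := wt_dmono (m' := m') (k:=k) (h:=h) (m:=m); rewrite e => /(_ (or_introl erefl) HM) [_ Hw'].
by move: wk; rewrite ltnNge (leq_trans _ Hw) // -Hw' leq_addl.
Qed.

Lemma Good0 v : Good v (fun _ => 0).
Proof. by exists [::]; split => // x; rewrite big_nil. Qed.

Lemma dirD0 k h x : dirD k h (fun _ : jet d E => 0) x = 0.
Proof. by rewrite /dirD (_ : (fun _ : R => 0) = cst 0) // derive1_cst. Qed.

Lemma Good_Dmulti w g ks hs : Good w g -> size hs = size ks ->
  Good (w - sumn (map (@scal d) ks)) (Dmulti ks hs g) /\
  ((w < sumn (map (@scal d) ks))%N -> forall x, Dmulti ks hs g x = 0).
Proof.
move=> Hg; elim: ks hs => [|k ks IH] [|h hs] //=.
  by move=> _; rewrite subn0.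
case=> /IH [HG HZ].
case: (ltnP w (sumn (map (@scal d) ks))) => Hw.
  have -> : Dmulti ks hs g = fun _ => 0 by apply/funext => x; apply: HZ.
  have -> : dirD k h (fun _ : jet d E => 0) = fun _ => 0.
    by apply/funext => x; exact: dirD0.
  by split; [exact: Good0|].
have [H1 H2] := Good_dirD k h HG.
split.
  by rewrite (_ : w - (scal k + sumn (map (@scal d) ks)) = w - sumn (map (@scal d) ks) - scal k)%N //; lia.
by move=> Hlt x; apply: H2; lia.
Qed.

Lemma scal_mi0 : scal (mi0 d) = 0%N.
Proof. by rewrite /scal big1 // => i _; rewrite /mi0 ffunE; case: ifP. Qed.

Lemma scal_ei (i : 'I_d) : (i : nat) != 0%N -> scal (ei i) = 1%N.
Proof.
move=> i0; rewrite /scal (bigD1 i) //= ffunE eqxx (negbTE i0) big1 ?addn0 // => j /negbTE ji.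
by rewrite ffunE ji; case: ifP.
Qed.

Lemma Good_P p q (F : ('I_p -> E) -> E) (withB : bool) (B : 'I_d -> ('I_q.+1 -> E) -> E) :
  multilinear F -> (forall i, multilinear (B i)) -> Good 1 (Ppoly F withB B).
Proof.
move=> HF HB.
pose mF := @Mono p F (fun _ => inl (mi0 d)).
pose mB := fun i => @Mono q.+1 (B i) (fun j : 'I_q.+1 => if (j : nat) == 0%N then inl (ei i) else inl (mi0 d)).
exists (mF :: (if withB then [seq mB i | i : 'I_d <- enum 'I_d & (i : nat) != 0%N] else [::])).
split.
  move=> m [<-|].
    split => //; rewrite /wt big1 // => j _ /=; by rewrite scal_mi0.
  case: withB => // H; have [i [Hi ->]] := In_map H; have [_ Hi0] := In_filter Hi; split; first exact: HB.
  rewrite /wt /mB /= big_ord_recl /= scal_ei // big1 // => j _ /=.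
  by rewrite scal_mi0.
move=> x; rewrite big_cons /Ppoly; congr (_ + _).
case: withB; last by rewrite big_nil.
rewrite big_map big_filter big_enum_cond; apply: eq_big => // i _.
rewrite /ev /=; congr (B i); apply/funext => j; by case: ifP.
Qed.

Lemma Dnonzero_P p q (F : ('I_p -> E) -> E) (withB : bool) (B : 'I_d -> ('I_q.+1 -> E) -> E) ks :
  multilinear F -> (forall i, multilinear (B i)) ->
  Dnonzero ks (Ppoly F withB B) -> (sumn (map (@scal d) ks) <= 1)%N.
Proof.
move=> HF HB [x [hs [Hs Hn]]]; rewrite leqNgt; apply/negP => Hlt.
have [_ HZ] := Good_Dmulti (Good_P withB HF HB) Hs.
by apply: Hn; apply: HZ.
Qed.
End An.
Close Scope classical_set_scope.
Section Tr.
Variables (R : realType) (beta : R) (d : nat).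

Definition tree_ind' (P : tree d -> Prop)
  (Hn : forall k j cs, (forall c, List.In c (map snd cs) -> P c) -> P (Node k j cs)) :
  forall t, P t :=
  fix F t := match t with Node k j cs => Hn k j cs
    ((fix G (cs : seq (mi d * tree d)) : forall c, List.In c (map snd cs) -> P c :=
        match cs with
        | [::] => fun c H => False_ind _ H
        | (e, c') :: cs' => fun c H =>
            match H with
            | or_introl E => eq_ind c' P (F c') c E
            | or_intror H' => G cs' c H'
            end
        end) cs) end.

Lemma verts_node (k : mi d) (j : nat) (cs : seq (mi d * tree d)) : verts (Node k j cs) =
  Node k j cs :: flatten (map (fun c => verts c.2) cs).
Proof.
rewrite /=; congr (_ :: _); elim: cs => //= [[e c] cs] IH /=; by rewrite IH.
Qed.

Lemma hom_node (k : mi d) (j : nat) (cs : seq (mi d * tree d)) : Defs.hom beta (Node k j cs) =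
  (scal k)%:R + (if j == 0%N then 0 else beta) +
  \sum_(c <- cs) (Defs.hom beta c.2 + 2 - (scal c.1)%:R).
Proof.
rewrite /=; congr (_ + _); elim: cs => [|[e c] cs IH] /=; first by rewrite big_nil.
by rewrite big_cons IH.
Qed.

Definition sv (v : tree d) : nat := sumn (map (@scal d) (map fst (children v))).

Definition wv (v : tree d) : R :=
  (scal (polylab v))%:R + (if noise v == 0%N then 0 else beta) + 2 - (sv v)%:R.

Lemma hom_sum t : Defs.hom beta t + 2 = \sum_(v <- verts t) wv v.
Proof.
move: t; apply: tree_ind' => k j cs IH.
rewrite verts_node big_cons big_flatten big_map hom_node.
have H : \sum_(c <- cs) \sum_(v <- verts c.2) wv v =
   \sum_(c <- cs) (Defs.hom beta c.2 + 2 - (scal c.1)%:R) + (sumn (map (@scal d) (map fst cs)))%:R.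
  elim: cs IH => [|[e c] cs IHc] IH; first by rewrite !big_nil addr0.
  rewrite !big_cons /= IHc; last by move=> c' Hc'; apply: IH; right.
  rewrite -IH; last by left.
  rewrite natrD; lra.
rewrite H /wv /sv /=; lra.
Qed.

Lemma sum_count (P : pred (tree d)) (w : tree d -> R) s :
  (forall v, List.In v s -> 0 <= w v) -> (forall v, List.In v s -> P v -> 1 <= w v) ->
  (count P s)%:R <= \sum_(v <- s) w v.
Proof.
elim: s => [|v s IH] H0 H1 /=; first by rewrite big_nil.
rewrite big_cons natrD; apply: lerD; last first.
  by apply: IH => u Hu; [apply: H0|apply: H1]; right.
case Pv: (P v); [by apply: H1 => //; left | by apply: H0; left].
Qed.

Lemma sum_ge0 (w : tree d -> R) s :
  (forall v, List.In v s -> 0 <= w v) -> 0 <= \sum_(u <- s) w u.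
Proof.
elim: s => [|u s IH] H0; first by rewrite big_nil.
rewrite big_cons addr_ge0 //; [apply: H0; left | apply: IH => v Hv; apply: H0; right] => //.
Qed.

Lemma sum_ge (w : tree d -> R) s v :
  (forall v, List.In v s -> 0 <= w v) -> List.In v s -> w v <= \sum_(u <- s) w u.
Proof.
elim: s => [|u s IH] H0 //= Hv; rewrite big_cons.
have Hs : 0 <= \sum_(x <- s) w x by apply: sum_ge0 => x Hx; apply: H0; right.
case: Hv => [->|Hv]; first by rewrite lerDl.
have Hu : 0 <= w u by apply: H0; left.
have := IH (fun x Hx => H0 x (or_intror Hx)) Hv; lra.
Qed.

Lemma sumn_count1 (s : seq nat) : sumn s = 1%N -> count (fun x => x == 1%N) s = 1%N.
Proof.
elim: s => //= a s IH; case: a => [|[|a]] /=.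
- by rewrite add0n => /IH.
- move=> [] /eqP; rewrite -/(sumn s) => /eqP Hs.
  suff -> : count (fun x => x == 1%N) s = 0%N by [].
  elim: s Hs {IH} => //= b s IH; case: b => //= /IH ->; by [].
- by rewrite addSn addSn.
Qed.
End Tr.
Unset Implicit Arguments.

Theorem lemma6 (R : realType) (d n : nat) (E : normedModType R)
  (p q : nat) (F : ('I_p -> E) -> E) (withB : bool)
  (B : 'I_d -> ('I_q.+1 -> E) -> E)
  (f : 'I_n -> jet d E -> E) (beta : R) (tau : tree d) :
  (2 <= d)%N -> (1 <= n)%N ->
  (* E is finite-dimensional *)
  (exists (m : nat) (b : 'I_m -> E),
     forall x : E, exists c : 'I_m -> R, x = \sum_(i < m) c i *: b i) ->
  (2 <= p)%N -> multilinear F ->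
  (withB -> p = q.*2.+1) -> (forall i, multilinear (B i)) ->
  (* f is a function on J: depends only on the components |k|_s < 2 *)
  (forall j (x y : jet d E), (forall k, (scal k < 2)%N -> x k = y k) -> f j x = f j y) ->
  ~ f_const f -> f_indep_grad f ->
  -2 < beta < 0 ->
  in_W_neg beta (rule (Ppoly F withB B) f) n tau ->
  (count (fun v => noise v == 0%N) (verts tau) <= 1)%N /\
  (forall v, List.In v (verts tau) -> noise v = 0%N ->
     count (fun e => scal e.1 == 1%N) (children v) = 1%N).
Proof.
move=> Hd Hn _ Hp HF HBq HB Hfj Hnc Hind /andP[Hb1 Hb2] [Hconf Hnpl Hhom].
have Hs : forall v, List.In v (verts tau) ->
    (noise v == 0%N -> (sv v <= 1)%N) /\ (noise v != 0%N -> sv v = 0%N).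
  move=> v Hv; have [_ Hr] := Hconf v Hv; move: Hr; rewrite /rule.
  case: eqP => [_ Hr|_ [_ Hi _]]; split => //.
    by move=> _; exact: (Dnonzero_P HF HB Hr).
  move=> _; have := Hi Hind; rewrite /sv.
  elim: (map fst (children v)) => //= k ks IH /andP[/eqP -> /IH ->].
  by rewrite scal_mi0.
have Hw0 : forall v, List.In v (verts tau) -> 0 <= wv beta v.
  move=> v Hv; have [H1 H2] := Hs v Hv; rewrite /wv.
  have Hk : 0 <= (scal (polylab v))%:R :> R by rewrite ler0n.
  case: eqP => [/eqP H0|/eqP H0].
    have : (sv v)%:R <= 1 :> R by rewrite (_ : 1 = 1%:R) // ler_nat H1.
    lra.
  rewrite H2 //; lra.
have Hw1 : forall v, List.In v (verts tau) -> noise v == 0%N ->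
    2 - (sv v)%:R <= wv beta v /\ 1 <= wv beta v.
  move=> v Hv H0; have [H1 H2] := Hs v Hv; rewrite /wv H0.
  have Hk : 0 <= (scal (polylab v))%:R :> R by rewrite ler0n.
  have : (sv v)%:R <= 1 :> R by rewrite (_ : 1 = 1%:R) // ler_nat H1.
  lra.
have Hsum : \sum_(v <- verts tau) wv beta v < 2.
  rewrite -hom_sum; move: Hhom => /andP[_ H]; lra.
split.
  have := sum_count (P := fun v => noise v == 0%N) Hw0 (fun v Hv H => (Hw1 v Hv H).2).
  move=> Hc; have : (count (fun v => noise v == 0%N) (verts tau))%:R < 2%:R :> R.
    by apply: le_lt_trans Hc _.
  by rewrite ltr_nat ltnS.
move=> v Hv /eqP H0.
have [H1 _] := Hs v Hv; have := H1 H0.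
have [Hw2 _] := Hw1 v Hv H0.
have Hle := sum_ge Hw0 Hv.
have : 0 < (sv v)%:R :> R by lra.
rewrite ltr0n => Hpos Hle1.
have Hsv : sv v = 1%N by apply/eqP; rewrite eqn_leq Hle1 Hpos.
have := sumn_count1 Hsv; rewrite !count_map; exact.
Qed.
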